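(* Suppose $H$ satisfies (B1) and (B2), and for $\alpha>0$ let $v^\alpha$ be the viscosity solution of (DP). There exists a constant $C>0$ such that for all $\alpha>0$, $$\|Dv^\alpha\|_{L^\infty(\mathbb{T}^d\times I)}+\|\Theta v^\alpha\|_{L^\infty(\mathbb{T}^d\times I)}\le C,$$ where $\Theta v(x,\xi):=\int_I k(\xi,\eta)(v(x,\xi)-v(x,\eta))\,d\eta$.
   Context: $I\subset\mathbb{R}$ finite interval, $|I|=1$; $k$ Borel measurable on $I\times I$ with $0<k_0\le k\le k_1$. $H\in C(\mathbb{T}^d\times\mathbb{R}^d)\otimes\mathcal{B}(I)$ with $H(\cdot,p,\cdot)$ bounded for each $p$. (DP): $\alpha v(x,\xi)+H(x,Dv(x,\xi),\xi)+\int_I k(\xi,\eta)(v(x,\xi)-v(x,\eta))d\eta=0$ in $\mathbb{T}^d\times I$ in the viscosity sense; it has a unique viscosity solution $v^\alpha\in C(\mathbb{T}^d)\otimes\mathcal{B}(I)$ with $|v^\alpha|\le M/\alpha$, $M:=\sup|H(\cdot,0,\cdot)|$. (B1): $C_1|p|^m-C_2\le H(x,p,\xi)$ for constants $C_1,C_2>0$, $m>1$. (B2): for each $R>0$ a modulus $\omega_R$ with $|H(x,p,\xi)-H(y,p,\xi)|\le\omega_R(|x-y|)$ for $|p|\le R$. *)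

(* Defs.v *)
From HB Require Import structures.
From mathcomp Require Import all_boot all_order all_algebra.
From mathcomp Require Import all_classical all_reals all_analysis.
Set Implicit Arguments. Unset Strict Implicit. Unset Printing Implicit Defensive.
Import Order.TTheory GRing.Theory Num.Theory.
Import numFieldNormedType.Exports.
Local Open Scope classical_set_scope.
Local Open Scope ring_scope.

Section Defs.
Variables (R : realType) (d : nat).
Notation vec := 'rV[R]_d.

Definition Iint (a : R) : set R := `[a, a + 1].

Definition evec (i : 'I_d) : vec := delta_mx 0 i.

Definition enorm (p : vec) : R := Num.sqrt (\sum_(i < d) (p 0 i) ^+ 2).

(* Z^d-periodic functions on R^d = functions on the torus T^d *)
Definition periodic (T : Type) (f : vec -> T) : Prop :=
  forall (i : 'I_d) (x : vec), f (x + evec i) = f x.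

Definition C1 (phi : vec -> R) : Prop :=
  forall i : 'I_d, (forall x, derivable phi x (evec i)) /\
                   continuous (fun x => 'D_(evec i) phi x).

Definition grad (phi : vec -> R) (x : vec) : vec :=
  \row_(i < d) 'D_(evec i) phi x.

Definition Theta (a : R) (k : R -> R -> R) (v : vec -> R -> R) (x : vec) (xi : R) : R :=
  \int[@lebesgue_measure R]_(eta in Iint a) (k xi eta * (v x xi - v x eta)).

Definition admissible (a : R) (v : vec -> R -> R) : Prop :=
  (forall xi, Iint a xi -> continuous (fun x => v x xi) /\ periodic (fun x => v x xi)) /\
  (forall x, measurable_fun (Iint a) (v x)) /\
  (exists B : R, forall x xi, Iint a xi -> `|v x xi| <= B).

(* viscosity sub/super-solution of (DP):
   alpha v + H(x, Dv, xi) + Theta v = 0 in T^d x I; the equation is tested in x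
   for each fixed xi, the nonlocal term being evaluated on v itself. *)
Definition visc_sub (alpha a : R) (H : vec -> vec -> R -> R) (k : R -> R -> R)
    (v : vec -> R -> R) : Prop :=
  forall xi, Iint a xi -> forall (phi : vec -> R) (x0 : vec), C1 phi ->
    (\forall x \near x0, v x xi - phi x <= v x0 xi - phi x0) ->
    alpha * v x0 xi + H x0 (grad phi x0) xi + Theta a k v x0 xi <= 0.

Definition visc_super (alpha a : R) (H : vec -> vec -> R -> R) (k : R -> R -> R)
    (v : vec -> R -> R) : Prop :=
  forall xi, Iint a xi -> forall (phi : vec -> R) (x0 : vec), C1 phi ->
    (\forall x \near x0, v x xi - phi x >= v x0 xi - phi x0) ->
    alpha * v x0 xi + H x0 (grad phi x0) xi + Theta a k v x0 xi >= 0.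

Definition visc_sol alpha a H k v : Prop :=
  admissible a v /\ visc_sub alpha a H k v /\ visc_super alpha a H k v.

Definition kernel_hyp (a : R) (k : R -> R -> R) (k0 k1 : R) : Prop :=
  measurable_fun (Iint a `*` Iint a) (fun z : R * R => k z.1 z.2) /\
  0 < k0 /\ forall xi eta, Iint a xi -> Iint a eta -> k0 <= k xi eta <= k1.

Definition ham_hyp (a : R) (H : vec -> vec -> R -> R) : Prop :=
  (forall xi, Iint a xi ->
     continuous (fun xp : vec * vec => H xp.1 xp.2 xi) /\
     forall p, periodic (fun x => H x p xi)) /\
  (forall x p, measurable_fun (Iint a) (H x p)) /\
  (forall p, exists M : R, forall x xi, Iint a xi -> `|H x p xi| <= M).

Definition B1 (a : R) (H : vec -> vec -> R -> R) : Prop :=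
  exists C1 C2 m : R, 0 < C1 /\ 0 < C2 /\ 1 < m /\
    forall x p xi, Iint a xi -> C1 * (enorm p `^ m) - C2 <= H x p xi.

Definition modulus (w : R -> R) : Prop :=
  w 0 = 0 /\ (forall r s, 0 <= r -> r <= s -> 0 <= w r <= w s) /\
  w r @[r --> 0^'+] --> 0.

Definition B2 (a : R) (H : vec -> vec -> R -> R) : Prop :=
  forall Rad : R, 0 < Rad -> exists w : R -> R, modulus w /\
    forall x y p xi, Iint a xi -> enorm p <= Rad ->
      `|H x p xi - H y p xi| <= w (enorm (x - y)).

(* Lipschitz in x w.r.t. the Euclidean norm, i.e. ||D f||_{L^oo} <= L *)
Definition lipschitz_const (f : vec -> R) (L : R) : Prop :=
  forall x y, `|f x - f y| <= L * enorm (x - y).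

End Defs.

(* Main.v *)
From HB Require Import structures.
From mathcomp Require Import all_boot all_order all_algebra.
From mathcomp Require Import all_classical all_reals all_analysis.
From mathcomp Require Import ring lra measurable_realfun.
Require Import Defs.
Set Implicit Arguments. Unset Strict Implicit. Unset Printing Implicit Defensive.
Import Order.TTheory GRing.Theory Num.Theory.
Import numFieldNormedType.Exports.
Local Open Scope classical_set_scope.
Local Open Scope ring_scope.

Lemma is_derive_ext (R : numFieldType) (V W : normedModType R) (f g : V -> W) x v df :
  f = g -> is_derive x v f df -> is_derive x v g df.
Proof. by move=> ->. Qed.

Lemma is_derive_val (R : numFieldType) (V W : normedModType R) (f : V -> W) x v df df' :
  df = df' -> is_derive x v f df -> is_derive x v f df'.
Proof. by move=> ->. Qed.

Lemma is_derive_q (R : realType) n (c s : 'I_n -> R) (e : R) :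
  is_derive (0:R) 1 (fun t => e + \sum_(j < n) (c j + t * s j) ^+ 2)
    (\sum_(j<n) (2 * c j * s j)).
Proof.
have hj : forall j, is_derive (0:R) 1 (fun t : R => (c j + t * s j)^+2) (2 * c j * s j).
  move=> j.
  have h1 : is_derive (0:R) 1 (fun t : R => c j + t * s j) (s j).
    apply: (is_derive_val _ (is_derive_ext _ (is_deriveD (is_derive_cst (c j) (0:R) 1)
       (is_deriveZ (s j) (is_derive_id (0:R) 1))))).
      by rewrite add0r /GRing.scale /= mulr1.
    by apply/funext => t /=; rewrite /GRing.scale /= mulrC.
  have := is_deriveX 2 h1.
  apply: is_derive_val.
  by rewrite /= mul0r addr0 expr1 /GRing.scale /=; ring.
have := is_deriveD (is_derive_cst e (0:R) 1) (is_derive_sum hj).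
rewrite add0r; apply: is_derive_ext; apply/funext => t /=.
by rewrite fct_sumE.
Qed.

Lemma dir_is_derive (R : realType) d (f : 'rV[R]_d -> R) (z v : 'rV[R]_d) (dg : R) :
  is_derive (0:R) 1 (fun t => f (z + t *: v)) dg -> is_derive z v f dg.
Proof.
move=> [H1 H2].
have E : (fun h : R => h^-1 *: (((fun t => f (z + t *: v)) \o shift 0) (h *: 1) - (fun t => f (z + t *: v)) 0))
   = (fun h => h^-1 *: ((f \o shift z) (h *: v) - f z)).
  apply/funext => h /=; rewrite addr0 scale0r addr0 /GRing.scale /= mulr1 [_ + z]addrC. done.
split; first by move: H1; rewrite /derivable E.
by move: H2; rewrite /derive E.
Qed.

Definition qf (R : realType) d (w : 'rV[R]_d) (e : R) (z : 'rV[R]_d) :=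
  e + \sum_(j < d) (z 0 j - w 0 j) ^+ 2.

Lemma evecE (R : realType) d (i j : 'I_d) : evec R i 0 j = (i == j)%:R.
Proof. by rewrite /evec mxE /= eq_sym. Qed.

Lemma qf_gt0 (R : realType) d (w : 'rV[R]_d) e z : 0 < e -> 0 < qf w e z.
Proof.
move=> e0; rewrite /qf; apply: (lt_le_trans e0); rewrite lerDl.
by apply: sumr_ge0 => j _; exact: sqr_ge0.
Qed.

Lemma is_derive_sqrtq (R : realType) d (w z : 'rV[R]_d) (e : R) (i : 'I_d) :
  0 < e ->
  is_derive z (evec R i) (fun z => Num.sqrt (qf w e z))
     ((z 0 i - w 0 i) / Num.sqrt (qf w e z)).
Proof.
move=> e0; apply: dir_is_derive.
pose c j := z 0 j - w 0 j; pose s j := evec R i 0 j.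
have hq := is_derive_q c s e.
have Eq0 : e + \sum_(j < d) (c j + 0 * s j) ^+ 2 = qf w e z.
  by rewrite /qf; apply: congr2 => //; apply: eq_bigr => j _; rewrite mul0r addr0.
have hs : is_derive ((fun t => e + \sum_(j < d) (c j + t * s j) ^+ 2) 0) 1 Num.sqrt
   (2 * Num.sqrt ((fun t => e + \sum_(j < d) (c j + t * s j) ^+ 2) 0))^-1.
  apply: is_derive1_sqrt; rewrite /= Eq0.
  exact: (qf_gt0 w z e0).
have := @is_derive1_comp _ Num.sqrt (fun t => e + \sum_(j < d) (c j + t * s j) ^+ 2) 0 _ _ hs hq.
move=> H.
have Ev : (2 * Num.sqrt (e + \sum_(j < d) (c j + 0 * s j) ^+ 2))^-1 *
          \sum_(j < d) 2 * c j * s j = (z 0 i - w 0 i) / Num.sqrt (qf w e z).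
  rewrite Eq0.
  rewrite (bigD1 i) //= big1 ?addr0; last first.
    by move=> j /negbTE ji; rewrite /s evecE eq_sym ji mulr0.
  rewrite /s evecE eqxx mulr1 /c.
  have sq0 : Num.sqrt (qf w e z) != 0 by rewrite gt_eqF // sqrtr_gt0 qf_gt0.
  by rewrite invfM mulrC mulrA [_ * 2^-1]mulrC mulrA mulVf ?mul1r // pnatr_eq0.
rewrite Ev in H.
move: H; apply: is_derive_ext; apply/funext => t /=; congr Num.sqrt; rewrite /qf; congr (_ + _).
by apply: eq_bigr => j _; rewrite /c /s !mxE; congr (_ ^+ 2); rewrite /GRing.scale /=; ring.
Qed.

Section C.
Variables (T : topologicalType) (R : realType).
Implicit Types f g : T -> R.
Lemma cont_mul f g : continuous f -> continuous g -> continuous (fun x => f x * g x).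
Proof. by move=> cf cg x; apply: cvgM; [exact: cf|exact: cg]. Qed.
Lemma cont_add f g : continuous f -> continuous g -> continuous (fun x => f x + g x).
Proof. by move=> cf cg x; apply: cvgD; [exact: cf|exact: cg]. Qed.
Lemma cont_sub f g : continuous f -> continuous g -> continuous (fun x => f x - g x).
Proof. by move=> cf cg x; apply: cvgB; [exact: cf|exact: cg]. Qed.
Lemma cont_cst (c : R) : continuous (fun _ : T => c).
Proof. by move=> x; exact: cvg_cst. Qed.
Lemma cont_inv f : (forall x, f x != 0) -> continuous f -> continuous (fun x => (f x)^-1).
Proof. by move=> f0 cf x; apply: cvgV; [exact: f0|exact: cf]. Qed.
Lemma cont_sqrt f : continuous f -> continuous (fun x => Num.sqrt (f x)).
Proof. by move=> cf x; apply: continuous_comp; [exact: cf|exact: sqrt_continuous]. Qed.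
End C.

Lemma contsum (R : realType) (T : topologicalType) n (f : 'I_n -> T -> R) :
  (forall j, continuous (f j)) -> continuous (fun x => \sum_(j<n) f j x).
Proof.
move=> hf; have -> : (fun x => \sum_(j<n) f j x) = \sum_(j<n) f j.
  by apply/funext => x; rewrite fct_sumE.
elim/big_ind: _ => //; first by move=> x; exact: cst_continuous.
by move=> g h cg ch x; apply: cvgD; [exact: cg|exact: ch].
Qed.

Lemma qf_cont (R : realType) d (w : 'rV[R]_d) e : continuous (qf w e).
Proof.
apply: cont_add; first exact: cont_cst.
apply: contsum => j.
have -> : (fun z : 'rV[R]_d => (z 0 j - w 0 j) ^+ 2) = (fun z => (z 0 j - w 0 j) * (z 0 j - w 0 j)).
  by apply/funext => z; rewrite expr2.
by apply: cont_mul; apply: cont_sub; (exact: cont_cst || exact: coord_continuous).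
Qed.

Lemma sqrtq_cont (R : realType) d (w : 'rV[R]_d) e : continuous (fun z => Num.sqrt (qf w e z)).
Proof. by apply: cont_sqrt; exact: qf_cont. Qed.

Definition phi (R : realType) d (w : 'rV[R]_d) e L z := L * Num.sqrt (qf w e z).

Lemma phi_cont (R : realType) d (w : 'rV[R]_d) e L : continuous (phi w e L).
Proof. by apply: cont_mul; [exact: cont_cst|exact: sqrtq_cont]. Qed.

Lemma phi_is_derive (R : realType) d (w z : 'rV[R]_d) (e L : R) (i : 'I_d) :
  0 < e ->
  is_derive z (evec R i) (phi w e L) (L * ((z 0 i - w 0 i) / Num.sqrt (qf w e z))).
Proof.
move=> e0; have := is_deriveZ L (is_derive_sqrtq w z i e0).
by apply: is_derive_ext; apply/funext => y.
Qed.

Lemma phi_C1 (R : realType) d (w : 'rV[R]_d) (e L : R) : 0 < e -> C1 (phi w e L).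
Proof.
move=> e0 i; split; first by move=> x; case: (phi_is_derive w x L i e0).
have -> : (fun x => 'D_(evec R i) (phi w e L) x) =
   (fun x => L * ((x 0 i - w 0 i) / Num.sqrt (qf w e x))).
  by apply/funext => x; case: (phi_is_derive w x L i e0).
apply: cont_mul; first exact: cont_cst.
apply: cont_mul.
  by apply: cont_sub; (exact: cont_cst || exact: coord_continuous).
apply: cont_inv; first by move=> x; rewrite gt_eqF // sqrtr_gt0 qf_gt0.
exact: sqrtq_cont.
Qed.

Lemma enorm_sq (R : realType) d (x : 'rV[R]_d) : enorm x ^+ 2 = \sum_(j < d) (x 0 j) ^+ 2.
Proof. by rewrite /enorm sqr_sqrtr // sumr_ge0 // => j _; exact: sqr_ge0. Qed.

Lemma qf_enorm (R : realType) d (w z : 'rV[R]_d) e : qf w e z = e + enorm (z - w) ^+ 2.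
Proof. by rewrite enorm_sq /qf; congr (_ + _); apply: eq_bigr => j _; rewrite !mxE. Qed.

Lemma phi_grad_norm (R : realType) d (w z : 'rV[R]_d) (e L : R) : 0 < e -> 0 <= L ->
  enorm (grad (phi w e L) z) = L / Num.sqrt (qf w e z) * enorm (z - w).
Proof.
move=> e0 L0.
have sq0 : 0 < Num.sqrt (qf w e z) by rewrite sqrtr_gt0 qf_gt0.
rewrite /enorm.
have -> : \sum_(i < d) grad (phi w e L) z 0 i ^+ 2 =
    (L / Num.sqrt (qf w e z)) ^+ 2 * \sum_(i < d) (z - w) 0 i ^+ 2.
  rewrite mulr_sumr; apply: eq_bigr => i _.
  rewrite /grad mxE; case: (phi_is_derive w z L i e0) => _ ->.
  by rewrite !mxE; field; rewrite gt_eqF.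
rewrite sqrtrM ?sqr_ge0 // sqrtr_sqr ger0_norm //.
by rewrite divr_ge0 // ltW.
Qed.
Lemma mxnorm_le (R : realType) d (x : 'rV[R]_d) c : 0 <= c -> (forall j, `|x 0 j| <= c) -> `|x| <= c.
Proof.
move=> c0 h; rewrite [`|x|]mx_normrE; apply: bigmax_le => // -[i j] _ /=.
by rewrite (ord1 i); exact: h.
Qed.

Lemma coord_le_enorm (R : realType) d (x : 'rV[R]_d) j : `|x 0 j| <= enorm x.
Proof.
rewrite /enorm -(sqrtr_sqr (x 0 j)) ler_sqrt; last by rewrite sumr_ge0 // => i _; exact: sqr_ge0.
by rewrite (bigD1 j) //= lerDl sumr_ge0 // => i _; exact: sqr_ge0.
Qed.

Lemma cont_enorm (R : realType) d (g : 'rV[R]_d -> R) y : continuous g ->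
  forall e, 0 < e -> exists2 r, 0 < r & forall z, enorm (z - y) < r -> `|g z - g y| < e.
Proof.
move=> cg e e0; have := cvgr_distC_lt _ _ (cg y) _ e0.
move=> H; have [r /= r0 hr] := proj1 (nbhs_normP _ _) (H ltac:(exact: nbhs_filter)); exists r => // z hz.
apply: hr => /=; rewrite -normrN opprB.
apply: le_lt_trans hz; apply: mxnorm_le; first exact: sqrtr_ge0.
move=> j; exact: coord_le_enorm.
Qed.

Lemma glob_max (R : realType) d (h : 'rV[R]_d -> R) (y : 'rV[R]_d) (r : R) :
  continuous h -> 0 <= r ->
  (forall z : 'rV[R]_d, (exists j, r < `|z 0 j - y 0 j|) -> h z < h y) ->
  exists z, forall w, h w <= h z.
Proof.
move=> ch r0 hout.
pose K := [set v : 'rV[R]_d | forall j, `[y 0 j - r, y 0 j + r]%classic (v 0 j)].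
have cK : compact K.
  by apply: (@rV_compact _ d (fun j => `[y 0 j - r, y 0 j + r]%classic)) => j; exact: segment_compact.
have yK : K y by move=> j /=; rewrite in_itv /=; apply/andP; split; lra.
have [c cK' hc] := EVT_max_rV (ex_intro _ y yK) cK (@continuous_subspaceT _ _ K h ch).
exists c => w.
have hy : h y <= h c by apply: hc; rewrite inE.
have [wK|wK] := pselect (K w); first by apply: hc; rewrite inE.
have : exists j, r < `|w 0 j - y 0 j|.
  apply: contra_notP wK => nj j /=.
  have : ~ (r < `|w 0 j - y 0 j|) by move=> hj; apply: nj; exists j.
  move/negP; rewrite -leNgt => hj.
  by rewrite in_itv /=; move: hj; rewrite ler_distlC => /andP[h1 h2]; apply/andP; split; lra.
by move/hout => /ltW hw; exact: le_trans hw hy.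
Qed.

Lemma enormC (R : realType) d (x y : 'rV[R]_d) : enorm (x - y) = enorm (y - x).
Proof.
by rewrite /enorm; congr Num.sqrt; apply: eq_bigr => j _; rewrite !mxE -sqrrN opprB.
Qed.

Lemma enorm_ge0 (R : realType) d (x : 'rV[R]_d) : 0 <= enorm x.
Proof. exact: sqrtr_ge0. Qed.

Lemma sqrt_sum_le (R : realType) (a b : R) : 0 <= a -> 0 <= b ->
  Num.sqrt (a ^+ 2 + b ^+ 2) <= a + b.
Proof.
move=> a0 b0; rewrite -(ger0_norm (addr_ge0 a0 b0)) -sqrtr_sqr ler_sqrt; last exact: sqr_ge0.
by rewrite sqrrD -mulr_natr; nra.
Qed.

Lemma sqrtq_ge_coord (R : realType) d (w z : 'rV[R]_d) e j : 0 <= e ->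
  `|z 0 j - w 0 j| <= Num.sqrt (qf w e z).
Proof.
move=> e0; have q0 : 0 <= qf w e z.
  by rewrite /qf; apply: addr_ge0 => //; apply: sumr_ge0 => i _; exact: sqr_ge0.
rewrite -sqrtr_sqr ler_sqrt //.
rewrite /qf (bigD1 j) //=.
have : 0 <= \sum_(i < d | i != j) (z 0 i - w 0 i) ^+ 2 by apply: sumr_ge0 => i _; exact: sqr_ge0.
lra.
Qed.

Lemma qf_self (R : realType) d (w : 'rV[R]_d) e : qf w e w = e.
Proof. by rewrite /qf big1 ?addr0 // => j _; rewrite subrr expr0n. Qed.

Lemma lip_test (R : realType) d (g : 'rV[R]_d -> R) (B L : R) :
  continuous g -> (forall x, `|g x| <= B) -> 0 <= L ->
  (forall (f : 'rV[R]_d -> R) z, C1 f -> (forall w, g w - f w <= g z - f z) ->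
      enorm (grad f z) <= L) ->
  lipschitz_const g L.
Proof.
move=> cg gB L0 test.
have B0 : 0 <= B := le_trans (normr_ge0 _) (gB 0).
have aux : forall x y L' del, L < L' -> 0 < del ->
    g x - g y <= L' * enorm (x - y) + del + del.
  move=> x y L' del LL' del0.
  have L'0 : 0 < L' := le_lt_trans L0 LL'.
  have [rho rho0 hrho] := cont_enorm y cg del0.
  pose ka := L' ^+ 2 - L ^+ 2.
  have ka0 : 0 < ka by rewrite /ka; nra.
  have ska0 : 0 < Num.sqrt ka by rewrite sqrtr_gt0.
  have skaE : Num.sqrt ka ^+ 2 = ka by rewrite sqr_sqrtr // ltW.
  pose eps := Num.min (del / L') (rho * Num.sqrt ka / (L + 1)).
  have eps0 : 0 < eps.
    by rewrite lt_min; apply/andP; split; apply: divr_gt0 => //;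
      [exact: mulr_gt0| exact: ltr_wpDl].
  have e1 : eps <= del / L' by rewrite ge_min lexx.
  have e2 : eps <= rho * Num.sqrt ka / (L + 1) by rewrite ge_min lexx orbT.
  have epsd : L' * eps <= del.
    by rewrite mulrC -ler_pdivlMr.
  have epsr : eps * (L + 1) <= rho * Num.sqrt ka.
    by rewrite -ler_pdivlMr // ltr_wpDl.
  pose f := phi y (eps ^+ 2) L'.
  have fy : f y = L' * eps by rewrite /f /phi qf_self sqrtr_sqr ger0_norm // ltW.
  have fge : forall (w : 'rV[R]_d) j, L' * `|w 0 j - y 0 j| <= f w.
    move=> w j; rewrite /f /phi; apply: ler_wpM2l; first exact: ltW.
    by apply: sqrtq_ge_coord; exact: sqr_ge0.
  have [z hz] : exists z, forall w, (g w - f w) <= (g z - f z).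
    apply: (@glob_max R d (fun w => g w - f w) y ((B + B + L' * eps + 1) / L')).
    - by apply: cont_sub => //; exact: phi_cont.
    - by apply: divr_ge0; [nra| exact: ltW].
    - move=> w [j hj] /=.
      have := fge w j; rewrite fy.
      have h1 : B + B + L' * eps + 1 < L' * `|w 0 j - y 0 j|.
        by move: hj; rewrite ltr_pdivrMr // [_ * L']mulrC.
      have := gB w; have := gB y; rewrite !ler_norml => /andP[h2 h3] /andP[h4 h5].
      lra.
  have e20 : 0 < eps ^+ 2 by exact: exprn_gt0.
  have hz' := test f z (phi_C1 _ _ e20) hz.
  rewrite /f phi_grad_norm // in hz'; last exact: ltW.
  set q := qf y (eps ^+ 2) z in hz'.
  set r := enorm (z - y) in hz'.
  have qE : q = eps ^+ 2 + r ^+ 2 by rewrite /q qf_enorm.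
  have q0 : 0 < q by rewrite /q qf_gt0.
  have sq0 : 0 < Num.sqrt q by rewrite sqrtr_gt0.
  have sqE : Num.sqrt q ^+ 2 = q by rewrite sqr_sqrtr // ltW.
  have r0 : 0 <= r by exact: enorm_ge0.
  have hr : L' * r <= L * Num.sqrt q.
    by move: hz'; rewrite mulrAC ler_pdivrMr.
  have hr2 : L' ^+ 2 * r ^+ 2 <= L ^+ 2 * q.
    rewrite -sqE; have : 0 <= L' * r by exact: mulr_ge0 (ltW L'0) r0.
    by nra.
  have rrho : r < rho.
    rewrite ltNge; apply/negP => rhor.
    have h1 : ka * r ^+ 2 <= L ^+ 2 * eps ^+ 2 by rewrite /ka; nra.
    have h2 : L * eps < rho * Num.sqrt ka by nra.
    have h3 : (L * eps) ^+ 2 < (rho * Num.sqrt ka) ^+ 2.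
      have h5 : 0 <= L * eps by nra.
      by rewrite ltr_pXn2r // ?nnegrE //; nra.
    have h4 : rho ^+ 2 * ka <= r ^+ 2 * ka.
      by rewrite ler_pM2r // ler_pXn2r // ?nnegrE //; lra.
    move: h3; rewrite !exprMn skaE; nra.
  have gz : g z < g y + del.
    by move: (hrho z rrho); rewrite ltr_norml => /andP[_ h]; lra.
  have hx := hz x.
  have fx : f x <= L' * eps + L' * enorm (x - y).
    rewrite /f /phi qf_enorm -mulrDr; apply: ler_wpM2l; first exact: ltW.
    by apply: sqrt_sum_le; [exact: ltW| exact: enorm_ge0].
  have fz : 0 <= f z by rewrite /f /phi mulr_ge0 ?ltW // sqrtr_ge0.
  lra.
suff key : forall x y, g x - g y <= L * enorm (x - y).
  move=> x y; rewrite ler_norml; apply/andP; split; last exact: key.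
  by have := key y x; rewrite enormC; lra.
move=> x y; apply/ler_addgt0Pr => e e0.
set r0 := enorm (x - y).
have r00 : 0 <= r0 by exact: enorm_ge0.
have h1 : 0 < e / (2 * (r0 + 1)) by apply: divr_gt0 => //; nra.
have h2 : e / (2 * (r0 + 1)) * r0 <= e / 2.
  rewrite mulrAC ler_pdivrMr; last by nra.
  have -> : e / 2 * (2 * (r0 + 1)) = e * (r0 + 1) by field.
  by nra.
have := aux x y (L + e / (2 * (r0 + 1))) (e / 4) _ _.
have : L + e / (2 * (r0 + 1)) > L by lra.
move=> H /(_ H) /(_ (divr_gt0 e0 _)) hh; have := hh ltac:(by []).
rewrite -/r0; nra.
Qed.

Lemma per_stepP (R : realType) d (T : Type) (f : 'rV[R]_d -> T) i :
  periodic f -> forall x (n : nat), f (x + n%:R *: evec R i) = f x.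
Proof.
move=> pf x; elim=> [|n IH]; first by rewrite scale0r addr0.
rewrite -[RHS]IH -(pf i (x + n%:R *: evec R i)); congr f.
by apply/rowP => j; rewrite !mxE mulrSr; ring.
Qed.

Lemma per_stepN (R : realType) d (T : Type) (f : 'rV[R]_d -> T) i :
  periodic f -> forall x (n : nat), f (x - n%:R *: evec R i) = f x.
Proof.
move=> pf x; elim=> [|n IH]; first by rewrite scale0r subr0.
rewrite -[RHS]IH -(pf i (x - n.+1%:R *: evec R i)); congr f.
by apply/rowP => j; rewrite !mxE mulrSr; ring.
Qed.

Lemma per_int (R : realType) d (T : Type) (f : 'rV[R]_d -> T) :
  periodic f -> forall (n : 'I_d -> int) y,
  f (y - \sum_(j < d) (n j)%:~R *: evec R j) = f y.
Proof.
move=> pf n.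
elim/big_ind: _ => [|s1 s2 h1 h2|j _] y; first by rewrite subr0.
  by rewrite opprD addrA h2 h1.
case: (n j) => m.
  by rewrite -pmulrn per_stepN.
by rewrite NegzE mulrNz scaleNr opprK -pmulrn per_stepP.
Qed.

Lemma sum_evec_coord (R : realType) d (c : 'I_d -> R) j :
  (\sum_(i < d) c i *: evec R i) 0 j = c j.
Proof.
rewrite summxE (bigD1 j) //= big1 ?addr0; last first.
  by move=> i ij; rewrite !mxE /= eq_sym (negbTE ij) mulr0.
by rewrite !mxE /= eqxx mulr1.
Qed.

Lemma per_reduce (R : realType) d (T : Type) (f : 'rV[R]_d -> T) :
  periodic f -> forall x y : 'rV[R]_d, exists y' : 'rV[R]_d,
    f y' = f y /\ forall j, x 0 j <= y' 0 j <= x 0 j + 1.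
Proof.
move=> pf x y.
pose n j := Num.floor (y 0 j - x 0 j).
exists (y - \sum_(j < d) (n j)%:~R *: evec R j); split; first exact: per_int.
move=> j; rewrite !mxE sum_evec_coord /n.
have h1 := Num.Theory.floor_le (y 0 j - x 0 j).
have h2 := Num.Theory.floorD1_gt (y 0 j - x 0 j).
rewrite intrD in h2.
apply/andP; split; lra.
Qed.

Lemma per_diam (R : realType) d (g : 'rV[R]_d -> R) L : periodic g ->
  lipschitz_const g L -> 0 <= L -> forall x y, `|g x - g y| <= L * Num.sqrt d%:R.
Proof.
move=> pg lg L0 x y.
have [y' [<- hy']] := per_reduce pg x y.
apply: (le_trans (lg x y')); apply: ler_wpM2l => //.
rewrite /enorm ler_sqrt //.
rewrite -[d in d%:R]card_ord -sumr_const.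
apply: ler_sum => j _; rewrite !mxE.
by move: (hy' j) => /andP[h1 h2]; nra.
Qed.

Lemma per_max (R : realType) d (g : 'rV[R]_d -> R) : periodic g -> continuous g ->
  exists z, forall w, g w <= g z.
Proof.
move=> pg cg.
pose K := [set v : 'rV[R]_d | forall j, `[(0:R), (1:R)]%classic (v 0 j)].
have cK : compact K.
  by apply: (@rV_compact _ d (fun j => `[(0:R), (1:R)]%classic)) => j; exact: segment_compact.
have K0 : K 0 by move=> j /=; rewrite mxE in_itv /= lexx ler01.
have [c _ hc] := EVT_max_rV (ex_intro _ 0 K0) cK (@continuous_subspaceT _ _ K g cg).
exists c => w; have [w' [<- hw']] := per_reduce pg 0 w.
apply: hc; rewrite inE => j /=; rewrite in_itv /=.
by move: (hw' j); rewrite mxE add0r.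
Qed.

Lemma per_min (R : realType) d (g : 'rV[R]_d -> R) : periodic g -> continuous g ->
  exists z, forall w, g z <= g w.
Proof.
move=> pg cg.
have pg' : periodic (fun x => - g x) by move=> i x; rewrite /= pg.
have cg' : continuous (fun x => - g x).
  have -> : (fun x => - g x) = (fun x => 0 - g x) by apply/funext => x; rewrite sub0r.
  by apply: cont_sub => //; exact: cont_cst.
have [z hz] := @per_max R d (fun x => - g x) pg' cg'.
by exists z => w; have := hz w; rewrite lerN2.
Qed.

Section Integ.
Variables (R : realType) (a : R).
Local Notation mu := (@lebesgue_measure R).
Local Notation I := (Iint a).

Definition BM (f : R -> R) := measurable_fun I f /\ exists c, forall x, I x -> `|f x| <= c.

Lemma mI : measurable I.
Proof. exact: measurable_itv. Qed.

Lemma muI : mu I = 1%:E.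
Proof.
rewrite /Iint lebesgue_measure_itv /= ifT; last by rewrite lte_fin ltrDl.
by rewrite -EFinB addrAC subrr add0r.
Qed.

Lemma bnd_of (f : R -> R) c : (forall x, I x -> `|f x| <= c) -> [bounded f x | x in I].
Proof.
move=> h; rewrite /bounded_near.
near=> M.
move=> x Ax /=.
apply: le_trans (h x Ax) _.
near: M.
apply: nbhs_pinfty_ge; exact: num_real.
Unshelve. all: by end_near. Qed.

Lemma BM_int f : BM f -> mu.-integrable I (EFin \o f).
Proof.
move=> [mf [c hc]]; apply: measurable_bounded_integrable => //.
- exact: mI.
- by rewrite [X in (X < _)%E](_ : _ = 1%:E) ?ltry //; exact: muI.
- exact: bnd_of hc.
Qed.

Lemma BM_cst c : BM (fun=> c).
Proof. by split; [exact: measurable_cst | exists `|c|]. Qed.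

Lemma BM_add f g : BM f -> BM g -> BM (fun x => f x + g x).
Proof.
move=> [mf [c hc]] [mg [c' hc']]; split; first exact: measurable_funD.
exists (c + c') => x Ix; apply: le_trans (ler_normD _ _) _; exact: lerD (hc x Ix) (hc' x Ix).
Qed.

Lemma BM_opp f : BM f -> BM (fun x => - f x).
Proof.
move=> [mf [c hc]]; split; first exact: measurableT_comp.
by exists c => x Ix; rewrite normrN; exact: hc.
Qed.

Lemma BM_mul f g : BM f -> BM g -> BM (fun x => f x * g x).
Proof.
move=> [mf [c hc]] [mg [c' hc']]; split; first exact: measurable_funM.
exists (c * c') => x Ix; rewrite normrM; apply: ler_pM => //; [exact: hc|exact: hc'].
Qed.

Lemma Rint_le f g : BM f -> BM g -> (forall x, I x -> f x <= g x) ->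
  \int[mu]_(x in I) f x <= \int[mu]_(x in I) g x.
Proof. by move=> bf bg h; apply: le_Rintegral => //; [exact: mI|exact: BM_int|exact: BM_int]. Qed.

Lemma Rint_cst c : \int[mu]_(x in I) c = c.
Proof.
rewrite Rintegral_cst; last exact: mI.
by rewrite [X in fine X](_ : _ = 1%:E) /= ?mulr1 //; exact: muI.
Qed.

Lemma Rint_add f g : BM f -> BM g ->
  \int[mu]_(x in I) (f x + g x) = \int[mu]_(x in I) f x + \int[mu]_(x in I) g x.
Proof. by move=> bf bg; apply: RintegralD; [exact: mI|exact: BM_int|exact: BM_int]. Qed.

Lemma Rint_scal c f : BM f -> \int[mu]_(x in I) (c * f x) = c * \int[mu]_(x in I) f x.
Proof. by move=> bf; apply: RintegralZl; [exact: mI|exact: BM_int]. Qed.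

Lemma Rint_aff_le f g c c' : BM f -> BM g -> (forall x, I x -> f x <= c * g x + c') ->
  \int[mu]_(x in I) f x <= c * \int[mu]_(x in I) g x + c'.
Proof.
move=> bf bg h.
have bcg : BM (fun x => c * g x) by apply: BM_mul => //; exact: BM_cst.
rewrite -Rint_scal // -[c' in _ + c']Rint_cst -Rint_add //; last exact: BM_cst.
apply: Rint_le => //; apply: BM_add => //; exact: BM_cst.
Qed.

Lemma Rint_aff_ge f g c c' : BM f -> BM g -> (forall x, I x -> c * g x + c' <= f x) ->
  c * \int[mu]_(x in I) g x + c' <= \int[mu]_(x in I) f x.
Proof.
move=> bf bg h.
have bcg : BM (fun x => c * g x) by apply: BM_mul => //; exact: BM_cst.
rewrite -Rint_scal // -[c' in _ + c']Rint_cst -Rint_add //; last exact: BM_cst.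
apply: Rint_le => //; apply: BM_add => //; exact: BM_cst.
Qed.

End Integ.

Lemma ksec_BM (R : realType) (a : R) k k0 k1 xi :
  kernel_hyp a k k0 k1 -> Iint a xi -> BM a (fun eta => k xi eta).
Proof.
move=> [mk [k00 hk]] Ixi; split.
  have mII : measurable (Iint a `*` Iint a) by apply: measurableX; exact: mI.
  have := measurable_comp mII _ mk (measurable_funTS (pair1_measurable xi)).
  apply => //.
  by move=> _ [eta Ieta <-]; split.
exists k1 => eta Ieta; have /andP[h1 h2] := hk xi eta Ixi Ieta.
by rewrite ger0_norm // (le_trans (ltW k00) h1).
Qed.

Lemma vsec_BM (R : realType) d (a : R) (v : 'rV[R]_d -> R -> R) x :
  admissible a v -> BM a (v x).
Proof.
move=> [_ [mv [B hB]]]; split; first exact: mv.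
by exists B => eta Ieta; exact: hB.
Qed.

Lemma integrand_BM (R : realType) d (a : R) k k0 k1 (v : 'rV[R]_d -> R -> R) x xi :
  kernel_hyp a k k0 k1 -> admissible a v -> Iint a xi ->
  BM a (fun eta => k xi eta * (v x xi - v x eta)).
Proof.
move=> hk hv Ixi; apply: BM_mul; first exact: ksec_BM hk Ixi.
by apply: BM_add; [exact: BM_cst| apply: BM_opp; exact: vsec_BM].
Qed.

Lemma grad_alg (R : realType) (C1 m t G W p : R) : 0 < C1 -> 1 < m -> 1 <= t ->
  G <= C1 * t `^ (m - 1) -> 0 < G -> 0 <= p -> C1 * p `^ m <= W -> p <= t + W / G.
Proof.
move=> C10 m1 t1 tG G0 p0 hW.
have W0 : 0 <= W by apply: le_trans hW; apply: mulr_ge0; [exact: ltW|exact: powR_ge0].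
have WG0 : 0 <= W / G by apply: divr_ge0 => //; exact: ltW.
have [pt|tp] := leP p t; first by lra.
have p0' : 0 < p by lra.
have pm : p `^ m = p `^ (m - 1) * p.
  have e1 : p `^ (m - 1 + 1) = p `^ (m - 1) * p `^ 1.
    by rewrite powRD //; apply/implyP => _; rewrite gt_eqF.
  by rewrite subrK powRr1 ?ltW // in e1.
have tp' : t `^ (m - 1) <= p `^ (m - 1).
  by apply: ge0_ler_powR; rewrite ?nnegrE; lra.
suff : p <= W / G by lra.
rewrite ler_pdivlMr //.
apply: le_trans hW; rewrite pm.
have h1 : C1 * t `^ (m - 1) * p <= C1 * p `^ (m - 1) * p.
  by apply: ler_wpM2r; [exact: ltW| apply: ler_wpM2l => //; exact: ltW].
have h2 : G * p <= C1 * t `^ (m - 1) * p by apply: ler_wpM2r => //; exact: ltW.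
rewrite [p * G]mulrC mulrA; exact: le_trans h2 h1.
Qed.

Lemma choose_t (R : realType) (C1 m G : R) : 0 < C1 -> 1 < m -> 0 < G ->
  let t := Num.max 1 ((G / C1) `^ (m - 1)^-1) in 1 <= t /\ G <= C1 * t `^ (m - 1).
Proof.
move=> C10 m1 G0 t; split; first by rewrite le_max lexx.
have GC0 : 0 <= G / C1 by apply: divr_ge0; exact: ltW.
have h : ((G / C1) `^ (m - 1)^-1) `^ (m - 1) = G / C1.
  by rewrite -powRrM mulVf ?powRr1 // gt_eqF // subr_gt0.
have : (G / C1) `^ (m - 1)^-1 `^ (m - 1) <= t `^ (m - 1).
  apply: ge0_ler_powR; rewrite ?nnegrE ?powR_ge0 //; first by rewrite subr_ge0 ltW.
    by apply: le_trans ler01 _; rewrite le_max lexx.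
  by rewrite le_max lexx orbT.
by rewrite h ler_pdivrMr // mulrC.
Qed.
Set Implicit Arguments. Unset Strict Implicit. Unset Printing Implicit Defensive.
Import Order.TTheory GRing.Theory Num.Theory.
Import numFieldNormedType.Exports.
Local Open Scope classical_set_scope.
Local Open Scope ring_scope.

Definition sK (R : realType) (k0 k1 : R) := (k1 / k0 + 1) / k0.
Definition PK (R : realType) (k1 c2 M t G D : R) := M + M + k1 * D * t + k1 * D * (c2 + M) / G.
Definition U0 (R : realType) (k0 k1 c2 M t G D : R) :=
  2 * (sK k0 k1 * PK k1 c2 M t G D + k1 * k1 / (k0 * k0)).
Definition L0 (R : realType) (k0 k1 c2 M t G D : R) := t + (c2 + M + k1 * U0 k0 k1 c2 M t G D) / G.
Definition T0 (R : realType) (k0 k1 c2 M t G D : R) := M + M + k1 * (L0 k0 k1 c2 M t G D * D).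

Lemma consts_pos (R : realType) (k0 k1 c2 M t G D : R) : 0 < k0 -> 0 < k1 -> 0 < c2 ->
  0 <= M -> 1 <= t -> 0 < G -> 0 <= D ->
  [/\ 0 <= U0 k0 k1 c2 M t G D, 0 < L0 k0 k1 c2 M t G D & 0 <= T0 k0 k1 c2 M t G D].
Proof.
move=> k00 k10 c20 M0 t1 G0 D0.
have sK0 : 0 <= sK k0 k1 by rewrite /sK; apply: divr_ge0; [apply: addr_ge0 => //; apply: divr_ge0|]; exact: ltW.
have kD : 0 <= k1 * D by apply: mulr_ge0 => //; exact: ltW.
have PK0 : 0 <= PK k1 c2 M t G D.
  rewrite /PK; have h1 : 0 <= k1 * D * t by apply: mulr_ge0 => //; lra.
  have h2 : 0 <= k1 * D * (c2 + M) / G.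
    by apply: divr_ge0; [apply: mulr_ge0 => //; lra| exact: ltW].
  lra.
have U00 : 0 <= U0 k0 k1 c2 M t G D.
  rewrite /U0; apply: mulr_ge0 => //; apply: addr_ge0; first exact: mulr_ge0.
  by apply: divr_ge0; apply: mulr_ge0; exact: ltW.
have L00 : 0 < L0 k0 k1 c2 M t G D.
  rewrite /L0.
  have h : 0 <= (c2 + M + k1 * U0 k0 k1 c2 M t G D) / G.
    apply: divr_ge0; last exact: ltW.
    have : 0 <= k1 * U0 k0 k1 c2 M t G D by apply: mulr_ge0 => //; exact: ltW.
    lra.
  lra.
split => //; rewrite /T0.
have : 0 <= k1 * (L0 k0 k1 c2 M t G D * D) by apply: mulr_ge0; [exact: ltW| apply: mulr_ge0 => //; exact: ltW].
lra.
Qed.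

Section Core.
Variables (R : realType) (d : nat) (a : R) (k : R -> R -> R) (k0 k1 : R)
  (H : 'rV[R]_d -> 'rV[R]_d -> R -> R) (c1 c2 m M t G alpha B : R)
  (v : 'rV[R]_d -> R -> R).
Hypotheses (hk : kernel_hyp a k k0 k1)
  (hM : forall x xi, Iint a xi -> `|H x 0 xi| <= M)
  (hB1 : forall x p xi, Iint a xi -> c1 * (enorm p `^ m) - c2 <= H x p xi)
  (c10 : 0 < c1) (c20 : 0 < c2) (m1 : 1 < m) (t1 : 1 <= t) (G0 : 0 < G)
  (tG : G <= c1 * t `^ (m - 1))
  (alpha0 : 0 < alpha) (hv : visc_sol alpha a H k v)
  (hB : forall x xi, Iint a xi -> `|v x xi| <= B).

Local Notation I := (Iint a).
Local Notation Th := (Theta a k v).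

Lemma Ia : I a.
Proof. by rewrite /Iint /= in_itv /= lexx lerDl ler01. Qed.

Lemma k00 : 0 < k0.
Proof. by case: hk => _ []. Qed.

Lemma kb xi eta : I xi -> I eta -> k0 <= k xi eta <= k1.
Proof. by case: hk => _ [_ h]; exact: h. Qed.

Lemma k0k1 : k0 <= k1.
Proof. by have /andP[h1 h2] := kb Ia Ia; exact: le_trans h1 h2. Qed.

Lemma M0 : 0 <= M.
Proof. exact: le_trans (normr_ge0 _) (hM 0 Ia). Qed.

Lemma B0 : 0 <= B.
Proof. exact: le_trans (normr_ge0 _) (hB 0 Ia). Qed.

Lemma vcont xi : I xi -> continuous (fun x => v x xi).
Proof. by case: hv => [[h _] _] Ixi; case: (h xi Ixi). Qed.

Lemma vper xi : I xi -> periodic (fun x => v x xi).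
Proof. by case: hv => [[h _] _] Ixi; case: (h xi Ixi). Qed.

Lemma adm : admissible a v.
Proof. by case: hv. Qed.

Lemma grad_cst z : grad (fun _ : 'rV[R]_d => (0:R)) z = 0.
Proof.
apply/rowP => i; rewrite !mxE.
by case: (is_derive_cst (0:R) z (evec R i)).
Qed.

Lemma C1_cst : C1 (fun _ : 'rV[R]_d => (0:R)).
Proof.
move=> i; split; first by move=> x; case: (is_derive_cst (0:R) x (evec R i)).
have -> : (fun x => 'D_(evec R i) (fun _ : 'rV[R]_d => (0:R)) x) = (fun _ => 0).
  by apply/funext => x; case: (is_derive_cst (0:R) x (evec R i)).
exact: cont_cst.
Qed.

Lemma sub_test xi f z : I xi -> C1 f -> (forall w, v w xi - f w <= v z xi - f z) ->
  alpha * v z xi + H z (grad f z) xi + Th z xi <= 0.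
Proof.
move=> Ixi Cf hz; case: hv => _ [hs _]; apply: hs => //.
by apply: filterE => w; exact: hz.
Qed.

Lemma sub_max xi z : I xi -> (forall w, v w xi <= v z xi) ->
  alpha * v z xi + H z 0 xi + Th z xi <= 0.
Proof.
move=> Ixi hz; have := @sub_test xi (fun _ => 0) z Ixi C1_cst.
by rewrite grad_cst; apply => w; rewrite !subr0.
Qed.

Lemma super_min xi z : I xi -> (forall w, v z xi <= v w xi) ->
  0 <= alpha * v z xi + H z 0 xi + Th z xi.
Proof.
move=> Ixi hz; case: hv => _ [_ hs].
have := hs xi Ixi (fun _ => 0) z C1_cst.
rewrite grad_cst; apply.
by apply: filterE => w; rewrite !subr0.
Qed.

Lemma integ_BM x xi : I xi -> BM a (fun eta => k xi eta * (v x xi - v x eta)).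
Proof. by move=> Ixi; apply: integrand_BM hk adm Ixi. Qed.

Lemma Th_ge_cst x xi lo : I xi ->
  (forall eta, I eta -> lo <= k xi eta * (v x xi - v x eta)) -> lo <= Th x xi.
Proof.
move=> Ixi h; rewrite -[lo](Rint_cst a) /Theta.
by apply: Rint_le => //; [exact: BM_cst| exact: integ_BM].
Qed.

Lemma Th_le_cst x xi hi : I xi ->
  (forall eta, I eta -> k xi eta * (v x xi - v x eta) <= hi) -> Th x xi <= hi.
Proof.
move=> Ixi h; rewrite -[hi](Rint_cst a) /Theta.
by apply: Rint_le => //; [exact: integ_BM| exact: BM_cst].
Qed.

Lemma k1pos : 0 < k1.
Proof. exact: lt_le_trans k00 k0k1. Qed.

Lemma av_up x xi : I xi -> alpha * v x xi <= M.
Proof.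
move=> Ixi.
pose E := [set r | exists y eta, I eta /\ r = v y eta].
have E0 : E !=set0 by exists (v x xi), x, xi.
have hE : has_sup E.
  split => //; exists B => r [y [eta [Ieta ->]]].
  by have := hB y Ieta; rewrite ler_norml => /andP[_ ->].
have vS : v x xi <= sup E by apply: sup_upper_bound => //; exists x, xi.
suff h : alpha * sup E <= M.
  by apply: le_trans h; rewrite ler_pM2l.
apply/ler_addgt0Pr => e e0.
have ka0 : 0 < k1 + alpha by apply: addr_gt0; [exact: k1pos|exact: alpha0].
pose eps := e / (k1 + alpha).
have eps0 : 0 < eps by apply: divr_gt0.
have epsE : (k1 + alpha) * eps = e by rewrite /eps mulrC divfK // gt_eqF.
have [r [y [xi0 [Ixi0 ->]]] hr] := sup_adherent eps0 hE.
have [x1 hx1] := per_max (vper Ixi0) (vcont Ixi0).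
have h1 := sub_max Ixi0 hx1.
have h2 : - (k1 * eps) <= Th x1 xi0.
  apply: Th_ge_cst => // eta Ieta.
  have h3 : v x1 eta <= sup E by apply: sup_upper_bound => //; exists x1, eta.
  have h4 : v y xi0 <= v x1 xi0 := hx1 y.
  have /andP[kl ku] := kb Ixi0 Ieta.
  have k0' := k00.
  have h5 : 0 <= k xi0 eta by lra.
  have h6 : - eps <= v x1 xi0 - v x1 eta by lra.
  have h7 : k xi0 eta * (- eps) <= k xi0 eta * (v x1 xi0 - v x1 eta) by exact: ler_wpM2l.
  have h8 : k1 * eps >= k xi0 eta * eps by rewrite ler_pM2r.
  lra.
have h3 := hM x1 Ixi0; rewrite ler_norml in h3; move/andP: h3 => [h3 h3'].
have h4 : alpha * sup E <= alpha * v x1 xi0 + alpha * eps.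
  rewrite -mulrDr ler_pM2l //; have := hx1 y; lra.
lra.
Qed.

Lemma av_lo x xi : I xi -> - M <= alpha * v x xi.
Proof.
move=> Ixi.
pose E := [set r | exists y eta, I eta /\ r = - v y eta].
have E0 : E !=set0 by exists (- v x xi), x, xi.
have hE : has_sup E.
  split => //; exists B => r [y [eta [Ieta ->]]].
  by have := hB y Ieta; rewrite ler_norml => /andP[h _]; lra.
have vS : - v x xi <= sup E by apply: sup_upper_bound => //; exists x, xi.
suff h : alpha * sup E <= M.
  have : alpha * (- v x xi) <= alpha * sup E by rewrite ler_pM2l.
  lra.
apply/ler_addgt0Pr => e e0.
have ka0 : 0 < k1 + alpha by apply: addr_gt0; [exact: k1pos|exact: alpha0].
pose eps := e / (k1 + alpha).
have eps0 : 0 < eps by apply: divr_gt0.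
have epsE : (k1 + alpha) * eps = e by rewrite /eps mulrC divfK // gt_eqF.
have [r [y [xi0 [Ixi0 ->]]] hr] := sup_adherent eps0 hE.
have [x1 hx1] := per_min (vper Ixi0) (vcont Ixi0).
have h1 := super_min Ixi0 hx1.
have h2 : Th x1 xi0 <= k1 * eps.
  apply: Th_le_cst => // eta Ieta.
  have h3 : - v x1 eta <= sup E by apply: sup_upper_bound => //; exists x1, eta.
  have h4 : v x1 xi0 <= v y xi0 := hx1 y.
  have /andP[kl ku] := kb Ixi0 Ieta.
  have k0' := k00.
  have h5 : 0 <= k xi0 eta by lra.
  have h6 : v x1 xi0 - v x1 eta <= eps by lra.
  have h7 : k xi0 eta * (v x1 xi0 - v x1 eta) <= k xi0 eta * eps by exact: ler_wpM2l.
  have h8 : k1 * eps >= k xi0 eta * eps by rewrite ler_pM2r.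
  lra.
have h3 := hM x1 Ixi0; rewrite ler_norml in h3; move/andP: h3 => [h3 h3'].
have h4 : alpha * sup E <= alpha * (- v x1 xi0) + alpha * eps.
  rewrite -mulrDr ler_pM2l //; have := hx1 y; lra.
lra.
Qed.

Definition Sx x := sup [set r | exists2 eta, I eta & r = v x eta].
Definition u x eta := Sx x - v x eta.

Lemma Sx_has x : has_sup [set r | exists2 eta, I eta & r = v x eta].
Proof.
split; first by exists (v x a), a => //; exact: Ia.
exists B => r [eta Ieta ->].
by have := hB x Ieta; rewrite ler_norml => /andP[_ ->].
Qed.

Lemma Sx_ub x eta : I eta -> v x eta <= Sx x.
Proof. by move=> Ieta; apply: sup_upper_bound; [exact: Sx_has| exists eta]. Qed.

Lemma Sx_adh x : exists2 eta, I eta & Sx x - 1 < v x eta.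
Proof.
have [r [eta Ieta ->] h] := sup_adherent ltr01 (Sx_has x).
by exists eta.
Qed.

Lemma u_ge0 x eta : I eta -> 0 <= u x eta.
Proof. by move=> Ieta; rewrite /u subr_ge0; exact: Sx_ub. Qed.

Lemma u_BM x : BM a (fun eta => u x eta).
Proof. by apply: BM_add; [exact: BM_cst| apply: BM_opp; exact: vsec_BM adm]. Qed.

Lemma Th_low x xi : I xi -> - (k1 * u x xi) <= Th x xi.
Proof.
move=> Ixi; apply: Th_ge_cst => // eta Ieta.
have h1 := Sx_ub x Ieta; have h2 := u_ge0 x Ixi.
have /andP[kl ku] := kb Ixi Ieta; have k0' := k00.
have h5 : 0 <= k xi eta by lra.
have h6 : - u x xi <= v x xi - v x eta by rewrite /u; lra.
have h7 : k xi eta * (- u x xi) <= k xi eta * (v x xi - v x eta) by exact: ler_wpM2l.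
have h8 : k xi eta * u x xi <= k1 * u x xi by exact: ler_wpM2r.
lra.
Qed.

Lemma lipU U : (forall x xi, I xi -> u x xi <= U) -> 0 <= U ->
  forall xi, I xi -> lipschitz_const (fun x => v x xi) (t + (c2 + M + k1 * U) / G).
Proof.
move=> hU U0 xi Ixi.
have M0' := M0; have k1' := k1pos; have t1' := t1; have c20' := c20; have G0' := G0.
have a0' := alpha0.
apply: (@lip_test R d _ B) => //; first exact: vcont.
- by move=> x; exact: hB.
- apply: addr_ge0; first lra.
  apply: divr_ge0; last exact: ltW.
  have : 0 <= k1 * U by exact: mulr_ge0 (ltW k1') U0.
  lra.
move=> f z Cf hz.
have h := sub_test Ixi Cf hz.
have h1 := hB1 z (grad f z) Ixi.
have h2 := Th_low z Ixi.
have h3 := hU z xi Ixi.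
have h4 := av_lo z Ixi.
have h5 : k1 * u z xi <= k1 * U by apply: ler_wpM2l => //; exact: ltW.
apply: (grad_alg c10 m1 t1 tG G0 (enorm_ge0 _)).
lra.
Qed.

Lemma Th_up L : (forall eta, I eta -> lipschitz_const (fun x => v x eta) L) -> 0 <= L ->
  forall x xi, I xi -> Th x xi <= M + M + k1 * (L * Num.sqrt d%:R).
Proof.
move=> hL L0 x xi Ixi.
have a0' := alpha0.
have [x1 hx1] := per_max (vper Ixi) (vcont Ixi).
have h1 := sub_max Ixi hx1.
have h2 := hM x1 Ixi; rewrite ler_norml in h2; move/andP: h2 => [h2 h2'].
have h3 := av_lo x1 Ixi.
have LD0 : 0 <= L * Num.sqrt d%:R by apply: mulr_ge0 => //; exact: sqrtr_ge0.
have h4 : Th x xi <= 1 * Th x1 xi + k1 * (L * Num.sqrt d%:R).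
  rewrite /Theta.
  apply: (@Rint_aff_le R a (fun eta => k xi eta * (v x xi - v x eta))
            (fun eta => k xi eta * (v x1 xi - v x1 eta))); try exact: integ_BM.
  move=> eta Ieta.
  have hd := per_diam (vper Ieta) (hL eta Ieta) L0 x1 x.
  rewrite ler_norml in hd; move/andP: hd => [hd hd'].
  have hx := hx1 x.
  have /andP[kl ku] := kb Ixi Ieta; have k0' := k00.
  have h5 : 0 <= k xi eta by lra.
  have h6 : v x xi - v x eta <= (v x1 xi - v x1 eta) + L * Num.sqrt d%:R by lra.
  have h7 := ler_wpM2l h5 h6.
  have h8 : k xi eta * (L * Num.sqrt d%:R) <= k1 * (L * Num.sqrt d%:R) by exact: ler_wpM2r.
  rewrite mulrDr in h7; lra.
lra.
Qed.

Lemma Th_lo L : (forall eta, I eta -> lipschitz_const (fun x => v x eta) L) -> 0 <= L ->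
  forall x xi, I xi -> - (M + M + k1 * (L * Num.sqrt d%:R)) <= Th x xi.
Proof.
move=> hL L0 x xi Ixi.
have a0' := alpha0.
have [x1 hx1] := per_min (vper Ixi) (vcont Ixi).
have h1 := super_min Ixi hx1.
have h2 := hM x1 Ixi; rewrite ler_norml in h2; move/andP: h2 => [h2 h2'].
have h3 := av_up x1 Ixi.
have LD0 : 0 <= L * Num.sqrt d%:R by apply: mulr_ge0 => //; exact: sqrtr_ge0.
have h4 : 1 * Th x1 xi + - (k1 * (L * Num.sqrt d%:R)) <= Th x xi.
  rewrite /Theta.
  apply: (@Rint_aff_ge R a (fun eta => k xi eta * (v x xi - v x eta))
            (fun eta => k xi eta * (v x1 xi - v x1 eta))); try exact: integ_BM.
  move=> eta Ieta.
  have hd := per_diam (vper Ieta) (hL eta Ieta) L0 x1 x.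
  rewrite ler_norml in hd; move/andP: hd => [hd hd'].
  have hx := hx1 x.
  have /andP[kl ku] := kb Ixi Ieta; have k0' := k00.
  have h5 : 0 <= k xi eta by lra.
  have h6 : (v x1 xi - v x1 eta) - L * Num.sqrt d%:R <= v x xi - v x eta by lra.
  have h7 := ler_wpM2l h5 h6.
  have h8 : k xi eta * (L * Num.sqrt d%:R) <= k1 * (L * Num.sqrt d%:R) by exact: ler_wpM2r.
  rewrite mulrBr in h7; lra.
lra.
Qed.

Lemma u_bound T : (forall x xi, I xi -> - T <= Th x xi <= T) ->
  forall x xi, I xi -> u x xi <= (k1 * ((T + k1) / k0) + T) / k0.
Proof.
move=> hT x xi Ixi.
have [es Ies hes] := Sx_adh x.
have k0' := k00; have k1' := k1pos.
pose J := \int[@lebesgue_measure R]_(eta in I) u x eta.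
have hJ1 : k0 * J + - k1 <= Th x es.
  rewrite /Theta.
  apply: (@Rint_aff_ge R a (fun eta => k es eta * (v x es - v x eta))
            (fun eta => u x eta)); [exact: integ_BM| exact: u_BM|].
  move=> eta Ieta.
  have hu := u_ge0 x Ieta.
  have /andP[kl ku] := kb Ies Ieta.
  have h5 : 0 <= k es eta by lra.
  have h6 : u x eta - 1 <= v x es - v x eta by rewrite /u; lra.
  have h7 := ler_wpM2l h5 h6.
  have h8 : k0 * u x eta <= k es eta * u x eta by exact: ler_wpM2r.
  rewrite mulrBr mulr1 in h7; lra.
have hJ2 : Th x xi <= k1 * J + - (k0 * u x xi).
  rewrite /Theta.
  apply: (@Rint_aff_le R a (fun eta => k xi eta * (v x xi - v x eta))
            (fun eta => u x eta)); [exact: integ_BM| exact: u_BM|].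
  move=> eta Ieta.
  have hu := u_ge0 x Ieta; have hu' := u_ge0 x Ixi.
  have /andP[kl ku] := kb Ixi Ieta.
  have h5 : 0 <= k xi eta by lra.
  have e1 : v x xi - v x eta = u x eta - u x xi by rewrite /u; ring.
  rewrite e1 mulrBr.
  have h8 : k xi eta * u x eta <= k1 * u x eta by exact: ler_wpM2r.
  have h9 : k0 * u x xi <= k xi eta * u x xi by exact: ler_wpM2r.
  lra.
have /andP[hT1 hT2] := hT x es Ies.
have /andP[hT3 hT4] := hT x xi Ixi.
have hJ : J <= (T + k1) / k0 by rewrite ler_pdivlMr // mulrC; lra.
have hJ' : k1 * J <= k1 * ((T + k1) / k0) by apply: ler_wpM2l => //; exact: ltW.
rewrite ler_pdivlMr // mulrC; lra.
Qed.

Hypothesis hG : 2 * (sK k0 k1 * (k1 * k1 * Num.sqrt d%:R)) <= G.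

Lemma core_bound :
  (forall xi, I xi -> lipschitz_const (fun x => v x xi) (L0 k0 k1 c2 M t G (Num.sqrt d%:R))) /\
  (forall x xi, I xi -> `|Th x xi| <= T0 k0 k1 c2 M t G (Num.sqrt d%:R)).
Proof.
set D := Num.sqrt d%:R.
have D0 : 0 <= D by exact: sqrtr_ge0.
have k0' := k00; have k1' := k1pos; have M0' := M0; have t1' := t1; have G0' := G0.
have c20' := c20; have B0' := B0.
pose E := [set r | exists x xi, I xi /\ r = u x xi].
have E0 : E !=set0 by exists (u 0 a), 0, a; split => //; exact: Ia.
have uB : forall x xi, I xi -> u x xi <= B + B.
  move=> x xi Ixi; rewrite /u.
  have h1 : Sx x <= B.
    apply: ge_sup; first by exists (v x a), a => //; exact: Ia.
    by move=> r [eta Ieta ->]; have := hB x Ieta; rewrite ler_norml => /andP[_ ->].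
  by have := hB x Ixi; rewrite ler_norml => /andP[h2 _]; lra.
have hE : has_sup E by split => //; exists (B + B) => r [x [xi [Ixi ->]]]; exact: uB.
set Us := sup E.
have hU : forall x xi, I xi -> u x xi <= Us.
  by move=> x xi Ixi; apply: sup_upper_bound => //; exists x, xi.
have Us0 : 0 <= Us by apply: le_trans (u_ge0 0 Ia) (hU 0 a Ia).
set L := t + (c2 + M + k1 * Us) / G.
have L0' : 0 <= L.
  rewrite /L; apply: addr_ge0; first lra.
  apply: divr_ge0; last exact: ltW.
  have : 0 <= k1 * Us by apply: mulr_ge0 => //; exact: ltW.
  lra.
have hL := lipU hU Us0.
set T := M + M + k1 * (L * D).
have hT : forall x xi, I xi -> - T <= Th x xi <= T.
  move=> x xi Ixi; apply/andP; split; first exact: (Th_lo hL L0').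
  exact: (Th_up hL L0').
have hu := u_bound hT.
have hUs : Us <= (k1 * ((T + k1) / k0) + T) / k0.
  by apply: ge_sup => // r [x [xi [Ixi ->]]]; exact: hu.
have e1 : (k1 * ((T + k1) / k0) + T) / k0 = sK k0 k1 * T + k1 * k1 / (k0 * k0).
  by rewrite /sK; field; rewrite gt_eqF.
set ga := k1 * D * k1 / G.
have e2 : T = PK k1 c2 M t G D + ga * Us.
  by rewrite /T /L /PK /ga; field; rewrite gt_eqF.
have sK0 : 0 <= sK k0 k1 by rewrite /sK; apply: divr_ge0; [apply: addr_ge0 => //; apply: divr_ge0|]; exact: ltW.
have hga : sK k0 k1 * ga <= 1 / 2.
  have -> : sK k0 k1 * ga = sK k0 k1 * (k1 * k1 * D) / G.
    by rewrite /ga; field; rewrite gt_eqF.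
  rewrite ler_pdivrMr //; have hG' := hG; rewrite -/D in hG'; lra.
have hUs2 : Us <= U0 k0 k1 c2 M t G D.
  rewrite /U0; rewrite e1 e2 in hUs.
  have : sK k0 k1 * ga * Us <= 1 / 2 * Us by apply: ler_wpM2r.
  move: hUs; rewrite mulrDr mulrA.
  set P := PK k1 c2 M t G D.
  set q := k1 * k1 / (k0 * k0).
  set s0 := sK k0 k1.
  lra.
have hLL : L <= L0 k0 k1 c2 M t G D.
  rewrite /L /L0 lerD2l; apply: ler_wpM2r; first by rewrite invr_ge0 ltW.
  rewrite lerD2l; apply: ler_wpM2l => //; exact: ltW.
split.
  move=> xi Ixi x y; apply: le_trans (hL xi Ixi x y) _.
  by apply: ler_wpM2r => //; exact: enorm_ge0.
move=> x xi Ixi; rewrite ler_norml; have /andP[h1 h2] := hT x xi Ixi.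
have : T <= T0 k0 k1 c2 M t G D.
  rewrite /T /T0 lerD2l; apply: ler_wpM2l; first exact: ltW.
  by apply: ler_wpM2r.
by move=> h3; apply/andP; split; lra.
Qed.

End Core.

Unset Implicit Arguments.
Theorem mainTheorem7 (R : realType) (d : nat) (a : R) (k : R -> R -> R) (k0 k1 : R)
    (H : 'rV[R]_d -> 'rV[R]_d -> R -> R) :
  kernel_hyp a k k0 k1 -> ham_hyp a H -> B1 a H -> B2 a H ->
  exists C : R, 0 < C /\
    forall (alpha : R) (v : 'rV[R]_d -> R -> R), 0 < alpha ->
      visc_sol alpha a H k v ->
      exists LD LT : R, 0 <= LD /\ 0 <= LT /\ LD + LT <= C /\
        {ae @lebesgue_measure R, forall xi, Iint a xi ->
           lipschitz_const (fun x => v x xi) LD} /\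
        {ae @lebesgue_measure R, forall xi, Iint a xi ->
           forall x, `|Theta a k v x xi| <= LT}.
Proof.
move=> hk [_ [_ hHb]] [c1 [c2 [m [c10 [c20 [m1 hB1]]]]]] _.
have [M hM] := hHb 0.
have Ia' : Iint a a by rewrite /Iint /= in_itv /= lexx lerDl ler01.
have M0 : 0 <= M := le_trans (normr_ge0 _) (hM 0 a Ia').
have k00 : 0 < k0 by case: hk => _ [].
have k10 : 0 < k1.
  case: hk => _ [_ h]; have /andP[h1 h2] := h a a Ia' Ia'.
  exact: lt_le_trans k00 (le_trans h1 h2).
pose D : R := Num.sqrt d%:R.
have D0 : 0 <= D by exact: sqrtr_ge0.
pose G : R := 2 * (sK k0 k1 * (k1 * k1 * D)) + 1.
have sK0 : 0 <= sK k0 k1.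
  by rewrite /sK; apply: divr_ge0; [apply: addr_ge0 => //; apply: divr_ge0|]; exact: ltW.
have G0 : 0 < G.
  rewrite /G; have : 0 <= sK k0 k1 * (k1 * k1 * D).
    by apply: mulr_ge0 => //; apply: mulr_ge0 => //; apply: mulr_ge0; exact: ltW.
  lra.
have hG : 2 * (sK k0 k1 * (k1 * k1 * D)) <= G by rewrite /G lerDl.
have [t1 tG] := choose_t c10 m1 G0.
set t := Num.max 1 ((G / c1) `^ (m - 1)^-1) in t1 tG.
have [U00 L00 T00] := consts_pos k00 k10 c20 M0 t1 G0 D0.
exists (L0 k0 k1 c2 M t G D + T0 k0 k1 c2 M t G D); split; first lra.
move=> alpha v alpha0 hv.
have [[_ [_ [B hB]]] _] := hv.
have [hLip hTh] := core_bound hk hM hB1 c10 c20 m1 t1 G0 tG alpha0 hv hB hG.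
exists (L0 k0 k1 c2 M t G D), (T0 k0 k1 c2 M t G D).
split; first exact: ltW.
split => //; split => //.
split; apply: aeW => xi Ixi.
  exact: hLip.
by move=> x; exact: hTh.
Qed.
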